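(* Let $\sigma=(\sigma_1,\dots,\sigma_N):\Delta_d\to\mathbb{R}^N$ be continuous and of class $C^1$ on every open face of $\Delta_d$. Then $\sigma$ has finite volume if and only if for every subset $\{i_1,\dots,i_d\}\subset\{1,\dots,N\}$ the integral $\int_{\Delta_d}\sigma^*(\mathrm{d}x_{i_1}\wedge\dots\wedge\mathrm{d}x_{i_d})$ converges absolutely.
   Context: The standard $d$-simplex is $\Delta_d=\{(a_1,\dots,a_d)\in\mathbb{R}^d\mid a_i\ge 0,\ \sum a_i\le 1\}$. An open face of $\Delta_d$ is the interior of a face (of any dimension) of $\Delta_d$. The pull-back $\sigma^*(\omega)$ of a form is defined on the interior of $\Delta_d$, where $\sigma$ is $C^1$. Such a $\sigma$ is said to have finite volume if $\int_{\Delta_d}\sigma^*(\omega)$ converges absolutely for every continuous $d$-form $\omega$ on $\sigma(\Delta_d)$. *)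

(* Defs.v *)
From HB Require Import structures.
From mathcomp Require Import all_boot all_order all_algebra.
From mathcomp Require Import all_classical all_reals all_analysis.
Set Implicit Arguments. Unset Strict Implicit. Unset Printing Implicit Defensive.
Import Order.TTheory GRing.Theory Num.Theory.
Import numFieldNormedType.Exports.
Local Open Scope classical_set_scope.
Local Open Scope ring_scope.

Definition simplex (R : realType) (d : nat) : set 'rV[R]_d :=
  [set a | (forall i, 0 <= a ord0 i) /\ \sum_i a ord0 i <= 1].

Definition simplex_int (R : realType) (d : nat) : set 'rV[R]_d :=
  [set a | (forall i, 0 < a ord0 i) /\ \sum_i a ord0 i < 1].

(* Vertices e_0 = 0, e_{l+1} = l-th unit vector. *)
Definition vtx (R : realType) (d : nat) (v : 'I_d.+1) : 'rV[R]_d :=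
  \row_l (if v == lift ord0 l then 1 else 0).

(* Affine parametrization of the affine hull of the face spanned by the
   vertex set S (with #|S| = k.+1, vertices v_0,...,v_k listed by enum S):
   s |-> v_0 + sum_j s_j (v_{j+1} - v_0).  It maps the open standard
   k-simplex bijectively onto the open face of S. *)
Definition face_param (R : realType) (d : nat) (S : {set 'I_d.+1})
  (s : 'rV[R]_(#|S|.-1)) : 'rV[R]_d :=
  let v j := @vtx R d (nth ord0 (enum S) j) in
  v 0%N + \sum_(j < #|S|.-1) s ord0 j *: (v j.+1 - v 0%N).

Definition C1_on (R : realType) (k N : nat) (U : set 'rV[R]_k)
  (f : 'rV[R]_k -> 'rV[R]_N) : Prop :=
  (forall x, U x -> differentiable f x) /\
  (forall w : 'rV[R]_k, {within U, continuous (fun x => 'd f x w)}).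

Definition C1_on_face (R : realType) (d N : nat) (sigma : 'rV[R]_d -> 'rV[R]_N)
  (S : {set 'I_d.+1}) : Prop :=
  C1_on (@simplex_int R (#|S|.-1)) (sigma \o @face_param R d S).

(* Iterated Lebesgue integral over R^d (Tonelli order: first coordinate
   outermost); for R^0 the (point) measure. *)
Fixpoint iint (R : realType) (d : nat) : ('rV[R]_d -> \bar R) -> \bar R :=
  match d with
  | 0%N => fun f => f 0
  | d'.+1 => fun f =>
      (\int[@lebesgue_measure R]_x iint (fun v : 'rV[R]_d' =>
           f (row_mx (\row_(_ < 1) x) v)))%E
  end.

Definition abs_conv (R : realType) (d : nat) (F : 'rV[R]_d -> R) : Prop :=
  (iint (fun a => (\1_(@simplex_int R d) a * `|F a|)%:E) < +oo)%E.

(* Strictly increasing index maps I : {0..d-1} -> {0..N-1}, i.e.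
   subsets {i_1 < ... < i_d} of {1..N}. *)
Definition increasing (d N : nat) (I : {ffun 'I_d -> 'I_N}) : bool :=
  [forall j : 'I_d, forall k : 'I_d, (j < k)%N ==> (I j < I k)%N].

Definition jac_minor (R : realType) (d N : nat) (sigma : 'rV[R]_d -> 'rV[R]_N)
  (I : {ffun 'I_d -> 'I_N}) (a : 'rV[R]_d) : 'M[R]_d :=
  \matrix_(j, l) ('d sigma a (delta_mx ord0 l)) ord0 (I j).

(* sigma^*(dx_{i_1} /\ ... /\ dx_{i_d}) = det(Jacobian minor) da_1../\da_d *)
Definition pullback_dx (R : realType) (d N : nat) (sigma : 'rV[R]_d -> 'rV[R]_N)
  (I : {ffun 'I_d -> 'I_N}) (a : 'rV[R]_d) : R :=
  \det (jac_minor sigma I a).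

(* Pullback of the d-form omega = sum_{I increasing} f_I dx_I. *)
Definition pullback (R : realType) (d N : nat) (sigma : 'rV[R]_d -> 'rV[R]_N)
  (f : {ffun 'I_d -> 'I_N} -> 'rV[R]_N -> R) (a : 'rV[R]_d) : R :=
  \sum_(I | increasing I) f I (sigma a) * pullback_dx sigma I a.

Definition finite_volume (R : realType) (d N : nat)
  (sigma : 'rV[R]_d -> 'rV[R]_N) : Prop :=
  forall f : {ffun 'I_d -> 'I_N} -> 'rV[R]_N -> R,
    (forall I, increasing I -> {within sigma @` @simplex R d, continuous (f I)}) ->
    abs_conv (pullback sigma f).

(* Main.v *)
Require Import Defs.
From HB Require Import structures.
From mathcomp Require Import all_boot all_order all_algebra.
From mathcomp Require Import all_classical all_reals all_analysis.
From mathcomp Require Import ring lra.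
From mathcomp Require Import measurable_realfun.
Import Order.TTheory GRing.Theory Num.Theory.
Import numFieldNormedType.Exports.
Local Open Scope classical_set_scope.
Local Open Scope ring_scope.

Local Open Scope ereal_scope.

Lemma int_le_gen (R : realType) (f g : R -> \bar R) :
  (forall x, 0 <= f x) -> (forall x, f x <= g x) ->
  \int[@lebesgue_measure R]_x f x <= \int[@lebesgue_measure R]_x g x.
Proof.
move=> f0 fg.
have g0 x : 0 <= g x by exact: le_trans (f0 x) (fg x).
rewrite !ge0_integralTE//.
apply: le_ereal_sup => _ [h /= hf <-]; exists h => //= x.
exact: le_trans (hf x) (fg x).
Qed.

Lemma iint_ge0 (R : realType) d (f : 'rV[R]_d -> \bar R) :
  (forall x, 0 <= f x) -> 0 <= iint f.
Proof.
elim: d f => [|d IH] f f0 /=; first exact: f0.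
apply: integral_ge0 => x _; exact: IH.
Qed.

Lemma iint_le (R : realType) d (f g : 'rV[R]_d -> \bar R) :
  (forall x, 0 <= f x) -> (forall x, f x <= g x) -> iint f <= iint g.
Proof.
elim: d f g => [|d IH] f g f0 fg /=; first exact: fg.
apply: int_le_gen => x; first by apply: iint_ge0.
exact: IH.
Qed.

Lemma iint0 (R : realType) d : iint (fun _ : 'rV[R]_d => 0) = 0.
Proof.
elim: d => [|d IH] //=.
under eq_integral do rewrite IH.
exact: integral0.
Qed.
Lemma lsc_comp (R : realType) (T U : topologicalType) (f : U -> \bar R) (g : T -> U) :
  lower_semicontinuous f -> continuous g -> lower_semicontinuous (f \o g).
Proof.
move=> lf cg x a /lf [V HV HVa].
exists (g @^-1` V); first exact: (cg x V HV).
by move=> y /HVa.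
Qed.

Lemma lsc_cst0 (R : realType) (T : topologicalType) :
  lower_semicontinuous (fun _ : T => (0 : \bar R)).
Proof.
move=> x a a0; exists setT; first exact: filterT.
by [].
Qed.

Lemma split_lt (R : realType) (u v : \bar R) (a : R) : 0 <= u -> 0 <= v ->
  a%:E < u + v -> exists b c : R, [/\ a = (b + c)%R, b%:E < u & c%:E < v].
Proof.
case: u => [r| |] //; case: v => [s| |] //.
- rewrite !lee_fin -EFinD lte_fin => r0 s0 ars.
  exists (r - (r + s - a) / 2)%R, (s - (r + s - a) / 2)%R; split.
  + by field.
  + rewrite lte_fin; rewrite ltrBlDr ltrDl divr_gt0 // subr_gt0 //.
  + rewrite lte_fin; rewrite ltrBlDr ltrDl divr_gt0 // subr_gt0 //.
- move=> r0 _ _; exists (-1)%R, (a + 1)%R; split; rewrite ?ltNye ?ltey //.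
  + by rewrite addrC addrK.
  + by apply: (lt_le_trans _ r0); rewrite lte_fin; lra.
- move=> _ s0 _; exists (a + 1)%R, (-1)%R; split; rewrite ?ltNye ?ltey //.
  + by rewrite addrK.
  + by apply: (lt_le_trans _ s0); rewrite lte_fin; lra.
- move=> _ _ _; exists (a + 1)%R, (-1)%R; split; rewrite ?ltNye ?ltey //.
  by rewrite addrK.
Qed.

Lemma lsc_add (R : realType) (T : topologicalType) (f g : T -> \bar R) :
  (forall x, 0 <= f x) -> (forall x, 0 <= g x) ->
  lower_semicontinuous f -> lower_semicontinuous g ->
  lower_semicontinuous (fun x => f x + g x).
Proof.
move=> f0 g0 lf lg x a /(@split_lt R _ _ a (f0 x) (g0 x)) [b [c [-> bf cg]]].
have [V HV HVb] := lf x b bf; have [W HW HWc] := lg x c cg.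
exists (V `&` W); first exact: filterI.
by move=> y [/HVb Vy /HWc Wy]; rewrite EFinD lteD.
Qed.

Lemma lsc_sum (R : realType) (T : topologicalType) (I : Type) (r : seq I) (P : pred I)
  (F : I -> T -> \bar R) :
  (forall i x, 0 <= F i x) -> (forall i, lower_semicontinuous (F i)) ->
  lower_semicontinuous (fun x => \sum_(i <- r | P i) F i x).
Proof.
move=> F0 lF; elim: r => [|i r IH].
  under eq_fun do rewrite big_nil; exact: lsc_cst0.
under eq_fun do rewrite big_cons.
case: (P i) => //; apply: lsc_add => //.
by move=> x; apply: sume_ge0.
Qed.

Lemma ereal_le_via (R : realType) (z w : \bar R) :
  (forall b : R, b%:E < z -> b%:E <= w) -> z <= w.
Proof.
case: z => [r| |] H; last by rewrite leNye.
- case: w H => [s| |] H; last 2 first.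
  + by rewrite leey.
  + have := H (r - 1)%R; rewrite lte_fin leeNy_eq => /(_ ltac:(lra)) //.
  rewrite lee_fin; apply/negPn/negP; rewrite -ltNge => sr.
  have := H ((r + s) / 2)%R; rewrite !lte_fin lee_fin; clear H => /(_ ltac:(lra)); lra.
- case: w H => [s| |] H; last 2 first.
  + by rewrite leey.
  + by have := H 0%R; rewrite leeNy_eq => /(_ (ltry _)).
  have := H (s + 1)%R; rewrite lee_fin => /(_ (ltry _)); clear H => ?; exfalso; lra.
Qed.

Lemma le_limn_einf (R : realType) (u : (\bar R)^nat) (z : \bar R) :
  (forall b : R, b%:E < z -> \forall n \near \oo, b%:E < u n) ->
  z <= limn_einf u.
Proof.
move=> H; apply: ereal_le_via => b /H [N _ HN].
rewrite limn_einf_lim; apply: lime_ge; first exact: is_cvg_einfs.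
exists N => // n /= Nn; apply/ereal_infP => _ [k /= nk <-].
by apply/ltW/HN; rewrite /= (leq_trans Nn nk).
Qed.

Lemma limn_einf_le (R : realType) (u : (\bar R)^nat) (a : \bar R) :
  (forall n, u n <= a) -> limn_einf u <= a.
Proof.
move=> H; rewrite limn_einf_lim; apply: lime_le; first exact: is_cvg_einfs.
near=> n; apply: le_trans (H n); apply: ereal_inf_lbound; exists n => //=.
Unshelve. all: by end_near. Qed.

Lemma pair_continuous (R : realType) (T : topologicalType) (t : T) :
  continuous (fun x : R => (t, x)).
Proof.
move=> x; apply: (@cvg_pair _ _ _ _ (nbhs t) (nbhs x)) => //.
exact: cvg_cst.
Qed.

Lemma lsc_int (R : realType) (T : pseudoMetricType R) (H : T * R -> \bar R) :
  (forall z, 0 <= H z) -> lower_semicontinuous H ->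
  lower_semicontinuous (fun t => \int[@lebesgue_measure R]_x H (t, x)).
Proof.
move=> H0 lH t0 a ha; apply: contrapT => nV.
have ex n : exists t, ball t0 (n.+1%:R^-1)%R t /\
    \int[@lebesgue_measure R]_x H (t, x) <= a%:E.
  apply: contrapT => nex; apply: nV; exists (ball t0 (n.+1%:R^-1)%R).
    exact: nbhsx_ballx.
  move=> y By; rewrite ltNge; apply/negP => Hy; apply: nex; exists y; split => //.
have [ts Hts] := choice ex.
have ts_cvg : ts n @[n --> \oo] --> t0.
  apply/cvg_ballP => e e0; near=> n.
  apply: (@le_ball _ _ _ (n.+1%:R^-1)%R); last exact: (Hts n).1.
  apply/ltW; near: n.
  exact: (near_infty_natSinv_lt (PosNum e0)).
have pw x : H (t0, x) <= limn_einf (fun n => H (ts n, x)).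
  apply: le_limn_einf => b /lH [V HV HVb].
  have : (ts n, x) @[n --> \oo] --> (t0, x).
    apply: (@cvg_pair _ _ _ _ (nbhs t0) (nbhs x)) => //; exact: cvg_cst.
  move=> /(_ V HV) [N _ HN]; exists N => // n Nn; exact: HVb (HN n Nn).
have : \int[@lebesgue_measure R]_x H (t0, x) <= a%:E.
  apply: le_trans (@int_le_gen _ _ _ (fun x => H0 _) pw) _.
  apply: le_trans (fatou _ _ _ _) _ => //.
  - move=> n; apply: (measurable_realfun.lower_semicontinuous_measurable (f := fun x : R => H (ts n, x))).
    exact: (@lsc_comp _ _ _ H (fun x : R => (ts n, x)) lH (@pair_continuous R T (ts n))).
  - by apply: limn_einf_le => n; exact: (Hts n).2.
by rewrite leNgt ha.
Unshelve. all: by end_near. Qed.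

Local Close Scope ereal_scope.
Lemma mx_continuous (R : realType) (X : topologicalType) m n (f : X -> 'M[R]_(m,n)) :
  (forall i j, continuous (fun y => f y i j)) -> continuous f.
Proof.
move=> H x A /= [P HP sPA].
have : \forall y \near x, forall ij : 'I_m * 'I_n, P ij.1 ij.2 (f y ij.1 ij.2).
  apply: filter_forall => -[i j] /=; exact: (H i j x (P i j) (HP i j)).
apply: filterS => y Hy; apply: sPA => i j; exact: (Hy (i, j)).
Qed.

Lemma rowmx_continuous (R : realType) d :
  continuous (fun p : R * 'rV[R]_d => row_mx (\row_(_ < 1) p.1) p.2).
Proof.
apply: mx_continuous => i j; rewrite (ord1 i).
case: (split_ordP j) => k ->.
- under eq_fun do rewrite row_mxEl mxE.
  by case=> a b; exact: cvg_fst.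
- under eq_fun do rewrite row_mxEr.
  move=> p; apply: (@continuous_comp _ _ _ (fun p : R * 'rV[R]_d => p.2) (fun M : 'rV[R]_d => M 0 k)).
    by case: p => a b; exact: cvg_snd.
  exact: coord_continuous.
Qed.

Local Open Scope ereal_scope.
Lemma fst_cont (X Y : topologicalType) : continuous (@fst X Y).
Proof. by case=> a b; exact: cvg_fst. Qed.

Lemma snd_cont (X Y : topologicalType) : continuous (@snd X Y).
Proof. by case=> a b; exact: cvg_snd. Qed.

Lemma cont_pair (X Y Z : topologicalType) (f : X -> Y) (g : X -> Z) :
  continuous f -> continuous g -> continuous (fun x => (f x, g x)).
Proof. by move=> cf cg x; apply: cvg_pair; [exact: cf|exact: cg]. Qed.

Lemma cont_comp (X Y Z : topologicalType) (f : X -> Y) (g : Y -> Z) :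
  continuous f -> continuous g -> continuous (g \o f).
Proof. by move=> cf cg x; apply: continuous_comp; [exact: cf|exact: cg]. Qed.

Lemma phi_cont (R : realType) (T : topologicalType) d :
  continuous (fun q : (T * R) * 'rV[R]_d =>
    (q.1.1, row_mx (\row_(_ < 1) q.1.2) q.2)).
Proof.
apply: cont_pair.
  exact: (@cont_comp _ _ _ fst fst (@fst_cont _ _) (@fst_cont _ _)).
apply: (@cont_comp _ _ _ (fun q : (T * R) * 'rV[R]_d => (q.1.2, q.2))
  (fun p : R * 'rV[R]_d => row_mx (\row_(_ < 1) p.1) p.2)); last exact: rowmx_continuous.
apply: cont_pair; last exact: snd_cont.
exact: (@cont_comp _ _ _ fst snd (@fst_cont _ _) (@snd_cont _ _)).
Qed.

Lemma lsc_iint (R : realType) d : forall (T : pseudoMetricType R)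
  (F : T * 'rV[R]_d -> \bar R), (forall z, 0 <= F z) -> lower_semicontinuous F ->
  lower_semicontinuous (fun t => iint (fun v => F (t, v))).
Proof.
elim: d => [|d IH] T F F0 lF /=.
  apply: (@lsc_comp _ _ _ F (fun t : T => (t, (0%R : 'rV[R]_0))) lF) => t.
  apply: (@cvg_pair _ _ _ _ (nbhs t) (nbhs (0%R : 'rV[R]_0))) => //; exact: cvg_cst.
pose G := fun p : (T * R) * 'rV[R]_d => F (p.1.1, row_mx (\row_(_ < 1) p.1.2) p.2).
have lG : lower_semicontinuous G.
  exact: (@lsc_comp _ _ _ F _ lF (@phi_cont R T d)).
have := IH [the pseudoMetricType R of (T * R)%type] G (fun z => F0 _) lG.
move=> lH.
apply: (@lsc_int R T (fun p => iint (fun v => G (p, v)))) => //.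
by move=> z; apply: iint_ge0 => v; exact: F0.
Qed.

Lemma sec_cont (R : realType) d (x : R) :
  continuous (fun v : 'rV[R]_d => row_mx (\row_(_ < 1) x) v).
Proof.
apply: (@cont_comp _ _ _ (fun v : 'rV[R]_d => (x, v))
  (fun p : R * 'rV[R]_d => row_mx (\row_(_ < 1) p.1) p.2)); last exact: rowmx_continuous.
apply: cont_pair; last by move=> v; exact: cvg_id.
exact: cst_continuous.
Qed.

Lemma iint_meas (R : realType) d (f : 'rV[R]_d.+1 -> \bar R) :
  (forall x, 0 <= f x) -> lower_semicontinuous f ->
  measurable_fun setT (fun x : R => iint (fun v => f (row_mx (\row_(_ < 1) x) v))).
Proof.
move=> f0 lf.
apply: (measurable_realfun.lower_semicontinuous_measurable
  (f := fun x : R => iint (fun v => f (row_mx (\row_(_ < 1) x) v)))).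
apply: (@lsc_iint R d R (fun p : R * 'rV[R]_d => f (row_mx (\row_(_ < 1) p.1) p.2))).
  by move=> z; exact: f0.
exact: (@lsc_comp _ _ _ f _ lf (@rowmx_continuous R d)).
Qed.

Lemma iintD (R : realType) d (f g : 'rV[R]_d -> \bar R) :
  (forall x, 0 <= f x) -> (forall x, 0 <= g x) ->
  lower_semicontinuous f -> lower_semicontinuous g ->
  iint (fun x => f x + g x) = iint f + iint g.
Proof.
elim: d f g => [|d IH] f g f0 g0 lf lg //=.
under eq_integral => x _.
  rewrite (IH (fun v => f (row_mx (\row_(_ < 1) x) v)) (fun v => g (row_mx (\row_(_ < 1) x) v))) //.
  - over.
  - exact: (@lsc_comp _ _ _ f _ lf (@sec_cont R d x)).
  - exact: (@lsc_comp _ _ _ g _ lg (@sec_cont R d x)).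
rewrite ge0_integralD //.
- by move=> x _; apply: iint_ge0.
- exact: iint_meas.
- by move=> x _; apply: iint_ge0.
- exact: iint_meas.
Qed.

Lemma iint_sum (R : realType) d (I : Type) (r : seq I) (P : pred I)
  (F : I -> 'rV[R]_d -> \bar R) :
  (forall i x, 0 <= F i x) -> (forall i, lower_semicontinuous (F i)) ->
  iint (fun x => \sum_(i <- r | P i) F i x) = \sum_(i <- r | P i) iint (F i).
Proof.
move=> F0 lF; elim: r => [|i r IH].
  rewrite big_nil; under eq_fun do rewrite big_nil; exact: iint0.
rewrite big_cons; under eq_fun do rewrite big_cons.
case: (P i) => //.
rewrite iintD ?IH //.
- by move=> x; apply: sume_ge0.
- exact: lsc_sum.
Qed.

Local Close Scope ereal_scope.

Lemma card_setT_pred d : (#|[set: 'I_d.+1]%SET|.-1 = d)%N.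
Proof. by rewrite cardsT card_ord. Qed.

Lemma nth_enum_setT d (k : nat) : (k < d.+1)%N ->
  val (nth ord0 (enum [set: 'I_d.+1]%SET) k) = k.
Proof.
move=> kd.
have hs : (k < size (enum [set: 'I_d.+1]%SET))%N.
  by rewrite -cardE cardsT card_ord.
rewrite -(nth_map ord0 0%N val hs).
have -> : map val (enum [set: 'I_d.+1]%SET) = iota 0 d.+1.
  by rewrite enum_setT -enumT; exact: val_enum_ord.
by rewrite nth_iota.
Qed.

Lemma vtxE (R : realType) d (v : 'I_d.+1) l : @vtx R d v 0 l = if v == lift ord0 l then 1 else 0.
Proof. by rewrite /vtx mxE. Qed.

Lemma face_paramT (R : realType) d (s : 'rV[R]_(#|[set: 'I_d.+1]%SET|.-1)) (l : 'I_d) :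
  @face_param R d [set: 'I_d.+1]%SET s 0 l = s 0 (cast_ord (esym (card_setT_pred d)) l).
Proof.
rewrite /face_param !mxE summxE.
under eq_bigr => k _ do rewrite !mxE.
have v0 : forall l', (nth ord0 (enum [set: 'I_d.+1]%SET) 0 == lift ord0 l') = false.
  move=> l'; apply/negbTE/negP => /eqP /(congr1 val).
  by rewrite nth_enum_setT.
rewrite v0 add0r (bigD1 (cast_ord (esym (card_setT_pred d)) l)) //=.
rewrite big1 ?addr0.
  rewrite subr0.
  have -> : nth ord0 (enum [set: 'I_d.+1]%SET) l.+1 == lift ord0 l.
    apply/eqP/val_inj; rewrite nth_enum_setT //= ?ltnS //.

  by rewrite mulr1.
move=> j /eqP jl; rewrite subr0.
case: eqP => [/(congr1 val)|]; last by rewrite mulr0.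
have jd : (j.+1 < d.+1)%N.
  by rewrite ltnS -[X in (_ <= X)%N](card_setT_pred d); exact: ltn_ord.
rewrite nth_enum_setT // /= /bump /= add1n => -[jl'].
by exfalso; apply: jl; apply/val_inj.
Qed.

Lemma C1_T (R : realType) d N (sigma : 'rV[R]_d -> 'rV[R]_N) :
  C1_on_face sigma [set: 'I_d.+1]%SET ->
  forall w, {within @simplex_int R d, continuous (fun x => 'd sigma x w)}.
Proof.
rewrite /C1_on_face.
have H := @face_paramT R d.
move: (@face_param R d [set: 'I_d.+1]%SET) H.
move: (card_setT_pred d).
move: (#|[set: 'I_d.+1]%SET|.-1) => n e; subst n => fp H [_ C].
have E : sigma \o fp = sigma.
  apply: funext => s /=; congr sigma; apply/matrixP => i l.
  by rewrite (ord1 i) H cast_ord_id.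
by rewrite E in C.
Qed.

Lemma cvg_det (R : realType) (T : Type) (F : set_system T) (FF : Filter F) d
  (M : T -> 'M[R]_d) (A : 'M[R]_d) :
  (forall i j, (fun y => M y i j) @ F --> A i j) ->
  (fun y => \det (M y)) @ F --> \det A.
Proof.
move=> HM; rewrite /determinant.
apply: cvg_big => [|s _]; first exact: add_continuous.
apply: cvgM; first exact: cvg_cst.
apply: cvg_big => [|i _]; first exact: (@mul_continuous R).
exact: HM.
Qed.

Lemma int_nbhs (R : realType) d (a : 'rV[R]_d) : simplex_int a -> nbhs a (@simplex_int R d).
Proof.
move=> [pos sum1].
have h1 : \forall y \near a, forall i, 0 < (y : 'rV[R]_d) 0 i.
  apply: (@filter_forall _ _ (fun i (y : 'rV[R]_d) => 0 < y 0 i) (nbhs a) _) => i.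
  have := @coord_continuous R 1 d 0 i a.
  by move=> /cvgr_gt /(_ _ (pos i)).
have h2 : \forall y \near a, \sum_i (y : 'rV[R]_d) 0 i < 1.
  have c : continuous (fun y : 'rV[R]_d => \sum_i y 0 i).
    apply: continuous_big => [|i _]; first exact: add_continuous.
    exact: coord_continuous.
  exact: (cvgr_lt _ (c a) _ sum1).
by near=> y; split; near: y.
Unshelve. all: by end_near. Qed.

Lemma g_lsc (R : realType) d N (sigma : 'rV[R]_d -> 'rV[R]_N) (I : {ffun 'I_d -> 'I_N}) :
  C1_on_face sigma [set: 'I_d.+1]%SET ->
  lower_semicontinuous (fun a => ((\1_(@simplex_int R d) a) * `|pullback_dx sigma I a|)%:E).
Proof.
move=> C a b.
have ind0 y : 0 <= \1_(@simplex_int R d) y :> R by rewrite indicE; case: (_ \in _).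
case: (pselect (simplex_int a)) => ia; last first.
  rewrite indicE memNset // mul0r => b0; exists setT; first exact: filterT.
  move=> y _; apply: lt_le_trans b0 _; rewrite lee_fin.
  by apply: mulr_ge0.
rewrite indicE mem_set // mul1r lte_fin => hb.
have hpb : (fun y => `|pullback_dx sigma I y|) @ within (@simplex_int R d) (nbhs a) -->
    `|pullback_dx sigma I a|.
  apply: cvg_norm; rewrite /pullback_dx; apply: cvg_det => j l.
  rewrite /jac_minor; under eq_fun do rewrite mxE; rewrite mxE.
  have := (subspace_continuousP _ _).1 (@C1_T R d N sigma C (delta_mx 0 l)) a ia.
  exact: (continuous_cvg _ (@coord_continuous R 1 N 0 (I j) _)).
have := cvgr_gt _ hpb b hb.
move=> H; exists ([set y | simplex_int y -> (b < `|pullback_dx sigma I y|)%R] `&` @simplex_int R d).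
  apply: filterI; [exact: H | exact: int_nbhs].
by move=> y [Hy iy]; rewrite indicE mem_set // mul1r lte_fin; exact: Hy.
Qed.

Lemma simplex_compact (R : realType) d : compact (@simplex R d).
Proof.
have sumc : continuous (fun y : 'rV[R]_d => \sum_i y 0 i).
  apply: continuous_big => [|i _]; first exact: add_continuous.
  exact: coord_continuous.
have -> : @simplex R d = (\bigcap_(i in [set: 'I_d]) ((fun y : 'rV[R]_d => y 0 i) @^-1` [set x | 0 <= x]))
    `&` ((fun y : 'rV[R]_d => \sum_i y 0 i) @^-1` [set x | x <= 1]).
  apply/seteqP; split => y.
    by move=> [h1 h2]; split => // i _; exact: h1.
  by move=> [h1 h2]; split => // i; exact: h1.
apply: (@subclosed_compact _ _ [set v : 'rV[R]_d | forall i, `[0, 1]%classic (v ord0 i)]).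
- apply: closedI.
    apply: closed_bigI => i _; apply: closed_comp; last exact: closed_ge.
    by move=> y _; exact: coord_continuous.
  apply: closed_comp; last exact: closed_le.
  by move=> y _; exact: sumc.
- apply: (@rV_compact R d (fun=> `[0%R, 1%R]%classic)) => _; exact: segment_compact.
- move=> y [h1 h2] i; rewrite /= in_itv /=; apply/andP; split; first exact: h1.
  apply: le_trans h2; rewrite (bigD1 i) //= lerDl.
  by apply: sumr_ge0 => j _; exact: h1.
Qed.

Lemma comp_bounded (R : realType) d N (sigma : 'rV[R]_d -> 'rV[R]_N) (f : 'rV[R]_N -> R) :
  {within @simplex R d, continuous sigma} ->
  {within sigma @` @simplex R d, continuous f} ->
  exists M : nat, forall a, simplex a -> `|f (sigma a)| <= M%:R.
Proof.
move=> cs cf.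
have K1 := continuous_compact cs (@simplex_compact R d).
have K2 := continuous_compact cf K1.
have /compact_bounded [M0 [_ HM]] := K2.
have HM1 := HM (M0 + 1) ltac:(by rewrite ltrDl).
exists (Num.Def.archi_bound (M0 + 1)).
move=> a sa; apply: le_trans (HM1 (f (sigma a)) _) _.
  by exists (sigma a) => //; exists a.
have := @unstable.ltr_bound R (M0 + 1); exact: ltW.
Qed.

Theorem lemma2p3 (R : realType) (d N : nat) (sigma : 'rV[R]_d -> 'rV[R]_N) :
  {within @simplex R d, continuous sigma} ->
  (forall S : {set 'I_d.+1}, S != finset.set0 -> C1_on_face sigma S) ->
  (finite_volume sigma <->
   (forall I : {ffun 'I_d -> 'I_N}, increasing I -> abs_conv (pullback_dx sigma I))).
Proof.
move=> cs C1.
have CT : C1_on_face sigma [set: 'I_d.+1]%SET.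
  by apply: C1; apply/set0Pn; exists ord0; rewrite inE.
split.
  move=> FV I incI.
  pose f := fun (J : {ffun 'I_d -> 'I_N}) (y : 'rV[R]_N) => if J == I then 1 else 0 : R.
  have := FV f (fun J _ => @cst_continuous _ _ _).
  have -> : pullback sigma f = pullback_dx sigma I; last by [].
  apply: funext => a; rewrite /pullback (bigD1 I) //= /f eqxx mul1r big1 ?addr0 //.
  by move=> J /andP [_ /negbTE ->]; rewrite mul0r.
move=> H f cf.
have ex : forall I : {ffun 'I_d -> 'I_N}, exists M : nat, increasing I ->
    forall a, simplex a -> `|f I (sigma a)| <= M%:R.
  move=> I; case: (boolP (increasing I)) => incI.
    have [M HM] := @comp_bounded R d N sigma (f I) cs (cf I incI); exists M => _; exact: HM.
  by exists 0%N.
have [Mf HMf] := choice ex.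
pose g I a := ((\1_(@simplex_int R d) a) * `|pullback_dx sigma I a|)%:E.
have ind0 y : 0 <= \1_(@simplex_int R d) y :> R by rewrite indicE; case: (_ \in _).
have g0 I a : (0 <= g I a)%E by rewrite lee_fin mulr_ge0.
have lg I : lower_semicontinuous (g I) by exact: g_lsc.
pose h a := (\sum_(I | increasing I) \sum_(k < Mf I) g I a)%E.
have h0 a : (0 <= h a)%E.
  by apply: sume_ge0 => I _; apply: sume_ge0 => k _; exact: g0.
rewrite /abs_conv.
apply: (@le_lt_trans _ _ (iint h)).
  apply: iint_le => [a|a]; first by rewrite lee_fin mulr_ge0.
  case: (pselect (simplex_int a)) => ia; last first.
    by rewrite indicE memNset // mul0r.
  rewrite /h /g.
  under eq_bigr => I _ do rewrite sumEFin.
  rewrite sumEFin lee_fin indicE mem_set // mul1r.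
  rewrite /pullback; apply: le_trans (ler_norm_sum _ _ _) _.
  apply: ler_sum => I incI; rewrite sumr_const card_ord normrM mul1r -mulr_natl.
  apply: ler_wpM2r => //; apply: HMf => //.
  by case: ia => p s; split => [i|]; [exact: ltW|exact: ltW].
rewrite /h iint_sum //.
- apply: lte_sum_pinfty => I incI.
  rewrite iint_sum //.
  apply: lte_sum_pinfty => k _; exact: H.
- by move=> I x; apply: sume_ge0 => k _; exact: g0.
- move=> I; apply: lsc_sum => //.
Qed.
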